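(* Let $X$ be one of the types below, of rank $l$, with finite Weyl group $W$ having Coxeter number $h$ and exponents $m_1,\dots,m_l$ (so that $\exp(2\pi i m_j/h)$, $j=1,\dots,l$, are the eigenvalues of a Coxeter transformation of $W$). Setting $\zeta=e^{2\pi i/h}$, $$\prod_{j=1}^l\bigl(t^2-\zeta^{m_j}\bigr)=\frac{(1-t^{2h})(1-t^{2p})(1-t^{2q})(1-t^{2r})}{(1-t^2)(1-t^a)(1-t^b)(1-t^h)},$$ where $(a,b,h,p,q,r)$ is given by: $\mathsf A_l$ ($l\ge0$): $(2,\,l+1,\,l+1,\,\tfrac12(l+1),\,\tfrac12(l+1),\,1)$; $\mathsf D_l$ ($l\ge4$): $(4,\,2l-4,\,2l-2,\,l-2,\,2,\,2)$; $\mathsf E_6$: $(6,8,12,3,3,2)$; $\mathsf E_7$: $(8,12,18,4,3,2)$; $\mathsf E_8$: $(12,20,30,5,3,2)$; $\mathsf C_l$ ($l\ge2$): $(2,\,2l,\,2l,\,l,\,1,\,1)$; $\mathsf B_l$ ($l\ge3$): $(4,\,2l-2,\,2l,\,l-1,\,2,\,1)$; $\mathsf F_4$: $(6,8,12,3,2,1)$; $\mathsf G_2$: $(4,4,6,2,1,1)$. *)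

(* Defs.v *)
From HB Require Import structures.
From mathcomp Require Import all_boot all_order all_algebra.
From mathcomp Require Import complex Rstruct.
From Stdlib Require Import Reals.
Set Implicit Arguments. Unset Strict Implicit. Unset Printing Implicit Defensive.
Import GRing.Theory Num.Theory.

Notation CC := (complex Rdefinitions.R).

Inductive cartan_type : Type :=
| TA of nat | TB of nat | TC of nat | TD of nat
| TE6 | TE7 | TE8 | TF4 | TG2.

Definition admissible (X : cartan_type) : bool :=
  match X with
  | TA _ => true
  | TB l => (3 <= l)%N
  | TC l => (2 <= l)%N
  | TD l => (4 <= l)%N
  | _ => true
  end.

(* Exponents m_1, ..., m_l of the Weyl group (standard tables, Bourbaki);
   the size of this list is the rank l. *)
Definition exponents (X : cartan_type) : seq nat :=
  match X with
  | TA l => iota 1 l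
  | TB l => [seq (2 * i).+1 | i <- iota 0 l]
  | TC l => [seq (2 * i).+1 | i <- iota 0 l]
  | TD l => rcons [seq (2 * i).+1 | i <- iota 0 l.-1] l.-1
  | TE6 => [:: 1; 4; 5; 7; 8; 11]
  | TE7 => [:: 1; 5; 7; 9; 11; 13; 17]
  | TE8 => [:: 1; 7; 11; 13; 17; 19; 23; 29]
  | TF4 => [:: 1; 5; 7; 11]
  | TG2 => [:: 1; 5]
  end%N.

Definition rank (X : cartan_type) : nat := size (exponents X).

Definition coxeter_number (X : cartan_type) : nat :=
  match X with
  | TA l => l.+1
  | TB l => 2 * l
  | TC l => 2 * l
  | TD l => 2 * l - 2
  | TE6 => 12 | TE7 => 18 | TE8 => 30 | TF4 => 12 | TG2 => 6
  end%N.

(* The tuple (a, b, h, 2p, 2q, r) of the theorem's table.  Since p, q are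
   half-integers for type A, we record 2p and 2q (only t^(2p), t^(2q) occur). *)
Definition table (X : cartan_type) : nat * nat * nat * nat * nat * nat :=
  match X with
  | TA l => (2, l.+1, l.+1, l.+1, l.+1, 1)
  | TD l => (4, 2 * l - 4, 2 * l - 2, 2 * (l - 2), 4, 2)
  | TE6 => (6, 8, 12, 6, 6, 2)
  | TE7 => (8, 12, 18, 8, 6, 2)
  | TE8 => (12, 20, 30, 10, 6, 2)
  | TC l => (2, 2 * l, 2 * l, 2 * l, 2, 1)
  | TB l => (4, 2 * l - 2, 2 * l, 2 * (l - 1), 4, 1)
  | TF4 => (6, 8, 12, 6, 4, 1)
  | TG2 => (4, 4, 6, 4, 2, 1)
  end%N.

Definition zeta (h : nat) : CC :=
  Complex (cos (2 * PI / INR h))%R (sin (2 * PI / INR h))%R.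

Local Open Scope ring_scope.

Definition rhs_num (X : cartan_type) (t : CC) : CC :=
  let: (a, b, h, p2, q2, r) := table X in
  (1 - t ^+ (2 * h)) * (1 - t ^+ p2) * (1 - t ^+ q2) * (1 - t ^+ (2 * r)).

Definition rhs_den (X : cartan_type) (t : CC) : CC :=
  let: (a, b, h, p2, q2, r) := table X in
  (1 - t ^+ 2) * (1 - t ^+ a) * (1 - t ^+ b) * (1 - t ^+ h).

(* Main.v *)
Require Import Defs.
From HB Require Import structures.
From mathcomp Require Import all_boot all_order all_algebra.
From mathcomp Require Import complex Rstruct.
From Stdlib Require Import Reals Lra.
From mathcomp Require Import zify.
Import GRing.Theory Num.Theory.
Local Open Scope ring_scope.

Lemma zetaX h k : zeta h ^+ k =
  Complex (cos (2 * PI / INR h * INR k))%R (sin (2 * PI / INR h * INR k))%R.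
Proof.
elim: k => [|k IH].
  by rewrite expr0 /= Rmult_0_r cos_0 sin_0.
rewrite exprS IH /zeta S_INR.
set a := (2 * PI / INR h)%R.
rewrite (_ : (a * (INR k + 1))%R = (a + a * INR k)%R); last by ring.
rewrite cos_plus sin_plus.
apply/eqP; rewrite eq_complex /=; apply/andP; split; apply/eqP.
  rewrite /GRing.add /GRing.opp /GRing.mul /=. ring.
rewrite /GRing.add /GRing.opp /GRing.mul /=. ring.
Qed.

Lemma zeta_prim (h : nat) : (0 < h)%nat -> (h.-primitive_root (zeta h))%R.
Proof.
move=> h0; apply/andP; split => //; apply/forallP => i; apply/eqP.
rewrite unity_rootE zetaX.
have hR : (0 < INR h)%R by apply: lt_0_INR; apply/ltP.
case: (i.+1 =P h) => [-> | ne].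
  rewrite (_ : (2 * PI / INR h * INR h)%R = (2 * PI)%R); last by field; lra.
  by rewrite cos_2PI sin_2PI; apply/eqP.
apply/negbTE; rewrite eq_complex /=; apply/negP => /andP [/eqP c _].
have ilt : (i.+1 < h)%nat by rewrite ltn_neqAle (ltn_ord i) andbT; apply/eqP.
set th := (2 * PI / INR h * INR i.+1)%R.
have lt1 : (INR i.+1 < INR h)%R by apply: lt_INR; apply/ltP.
have pos1 : (0 < INR i.+1)%R by apply: lt_0_INR; apply/ltP.
have thpos : (0 < th / 2)%R.
  rewrite /th; have := PI_RGT_0 => ?.
  apply: Rmult_lt_0_compat; last lra.
  apply: Rmult_lt_0_compat => //. apply: Rmult_lt_0_compat; first lra.
  by apply: Rinv_0_lt_compat.
have thlt : (th / 2 < PI)%R.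
  rewrite /th; have := PI_RGT_0 => ?.
  rewrite (_ : (2 * PI / INR h * INR i.+1 / 2)%R = (PI * (INR i.+1 / INR h)))%R; last by field; lra.
  rewrite -{2}(Rmult_1_r PI); apply: Rmult_lt_compat_l => //.
  apply: (Rmult_lt_reg_r (INR h)) => //; rewrite /Rdiv Rmult_assoc Rinv_l; lra.
have := sin_gt_0 _ thpos thlt => sp.
have : cos (2 * (th / 2)) = 1%R.
  rewrite (_ : (2 * (th / 2))%R = th)%R; [exact: c | field].
rewrite cos_2a_sin => e.
have : (0 < sin (th / 2) * sin (th / 2))%R by apply: Rmult_lt_0_compat.
lra.
Qed.


From mathcomp Require Import ring.

Definition P (z x : CC) (s : seq nat) := \prod_(k <- s) (x - z ^+ k).

Lemma factor_eval (w : CC) n x : (n.-primitive_root w)%R ->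
  \prod_(i <- iota 0 n) (x - w ^+ i) = x ^+ n - 1.
Proof.
move=> pw; have := congr1 (fun p => p.[x]) (factor_Xn_sub_1 pw).
rewrite horner_prod hornerD hornerN hornerXn hornerC.
under eq_bigr do rewrite hornerXsubC.
by rewrite /index_iota subn0.
Qed.

Lemma factor_sub (z : CC) n d x : (n.-primitive_root z)%R -> (d %| n)%nat ->
  P z x [seq (n %/ d * j)%nat | j <- iota 0 d] = x ^+ d - 1.
Proof.
move=> pz dn; rewrite /P big_map -(@factor_eval _ _ x (dvdn_prim_root pz dn)).
by apply: eq_bigr => j _; rewrite exprM.
Qed.

Lemma P_cat z x s1 s2 : P z x (s1 ++ s2) = P z x s1 * P z x s2.
Proof. by rewrite /P big_cat. Qed.

Lemma P_mod z x n s : (n.-primitive_root z)%R ->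
  P z x s = P z x [seq (k %% n)%nat | k <- s].
Proof. by move=> pz; rewrite /P big_map; apply: eq_bigr => k _; rewrite prim_expr_mod. Qed.

Definition mults n d := [seq (n %/ (d %/ 2) * j)%nat | j <- iota 0 (d %/ 2)].
Definition prodl (t : CC) d0 ds :=
  foldl (fun acc d => acc * (1 - t ^+ d)) (1 - t ^+ d0) ds.
Definition okd n d := ~~ odd d && (d %/ 2 %| n)%nat.

Lemma prodl_big t d0 ds : prodl t d0 ds = \prod_(d <- d0 :: ds) (1 - t ^+ d).
Proof.
rewrite /prodl big_cons; move: (1 - t ^+ d0) => a.
elim: ds a => [|d ds IH] a /=; first by rewrite big_nil mulr1.
by rewrite IH big_cons mulrA.
Qed.

Lemma one_sub n z t d : (n.-primitive_root z)%R -> okd n d ->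
  1 - t ^+ d = - P z (t ^+ 2) (mults n d).
Proof.
move=> pz /andP [od dv]; rewrite /mults factor_sub // opprB.
have d2 : (2 %| d)%nat by rewrite dvdn2.
by rewrite -exprM mulnC divnK.
Qed.

Lemma big_list n z t l : (n.-primitive_root z)%R -> all (okd n) l ->
  \prod_(d <- l) (1 - t ^+ d) =
  (-1) ^+ size l * P z (t ^+ 2) (flatten (map (mults n) l)).
Proof.
move=> pz; elim: l => [|d l IH] /=; first by rewrite big_nil expr0 mul1r /P big_nil.
move=> /andP [hd hl]; rewrite big_cons IH // (@one_sub n z t d pz hd) P_cat.
by rewrite [X in _ = X * _]exprS mulN1r !mulNr mulrCA.
Qed.

Lemma fin_case n z t e d0 ds1 e0 ds2 :
  (n.-primitive_root z)%R -> all (okd n) (d0 :: ds1) -> all (okd n) (e0 :: ds2) ->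
  size ds1 = size ds2 ->
  perm_eq [seq (k %% n)%nat | k <- e ++ flatten (map (mults n) (d0 :: ds1))]
          [seq (k %% n)%nat | k <- flatten (map (mults n) (e0 :: ds2))] ->
  P z (t ^+ 2) e * prodl t d0 ds1 = prodl t e0 ds2.
Proof.
move=> pz h1 h2 hs hp.
rewrite !prodl_big (@big_list n z t _ pz h1) (@big_list n z t _ pz h2) /= hs.
rewrite mulrCA -P_cat; congr (_ * _).
by rewrite (@P_mod _ _ _ _ pz) [RHS](@P_mod _ _ _ _ pz); apply: perm_big.
Qed.
Definition lhsP X t := \prod_(m <- exponents X) (t ^+ 2 - zeta (coxeter_number X) ^+ m).

Lemma finish X t : rhs_den X t != 0 -> lhsP X t * rhs_den X t = rhs_num X t ->
  lhsP X t = rhs_num X t / rhs_den X t.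
Proof. by move=> hd <-; rewrite mulfK. Qed.

Lemma caseE6 t : lhsP TE6 t * rhs_den TE6 t = rhs_num TE6 t.
Proof.
have pz := @zeta_prim 12 isT.
have H : P (zeta 12) (t^+2) [:: 1; 4; 5; 7; 8; 11] * prodl t 2 [:: 6; 8; 12] = prodl t 24 [:: 6; 6; 4].
  apply: (@fin_case 12 (zeta 12) t _ 2 _ 24 _ pz); vm_compute; reflexivity.
exact: H.
Qed.

Lemma caseE8 t : lhsP TE8 t * rhs_den TE8 t = rhs_num TE8 t.
Proof.
have pz := @zeta_prim 30 isT.
have H : P (zeta 30) (t^+2) [:: 1; 7; 11; 13; 17; 19; 23; 29] * prodl t 2 [:: 12; 20; 30] = prodl t 60 [:: 10; 6; 4].
  apply: (@fin_case 30 (zeta 30) t _ 2 _ 60 _ pz); vm_compute; reflexivity.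
exact: H.
Qed.

Lemma caseF4 t : lhsP TF4 t * rhs_den TF4 t = rhs_num TF4 t.
Proof.
have pz := @zeta_prim 12 isT.
have H : P (zeta 12) (t^+2) [:: 1; 5; 7; 11] * prodl t 2 [:: 6; 8; 12] = prodl t 24 [:: 6; 4; 2].
  apply: (@fin_case 12 (zeta 12) t _ 2 _ 24 _ pz); vm_compute; reflexivity.
exact: H.
Qed.

Lemma caseG2 t : lhsP TG2 t * rhs_den TG2 t = rhs_num TG2 t.
Proof.
have pz := @zeta_prim 6 isT.
have H : P (zeta 6) (t^+2) [:: 1; 5] * prodl t 2 [:: 4; 4; 6] = prodl t 12 [:: 4; 2; 2].
  apply: (@fin_case 6 (zeta 6) t _ 2 _ 12 _ pz); vm_compute; reflexivity.
exact: H.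
Qed.

Lemma caseE7 t : lhsP TE7 t * rhs_den TE7 t = rhs_num TE7 t.
Proof.
have pz := @zeta_prim 18 isT.
have H : P (zeta 18) (t^+2) [:: 1; 5; 7; 9; 11; 13; 17] * prodl t 2 [:: 12; 18] = prodl t 36 [:: 6; 4].
  apply: (@fin_case 18 (zeta 18) t _ 2 _ 36 _ pz); vm_compute; reflexivity.
rewrite /lhsP /rhs_den /rhs_num /=.
move: H; rewrite /prodl /P /=.
set B := \prod_(_ <- _) _ => H.
transitivity ((B * ((1 - t^+2) * (1 - t^+12) * (1 - t^+18))) * (1 - t^+8)); first ring.
rewrite H; ring.
Qed.

Lemma odd_even (f : nat -> CC) n :
  \prod_(i <- iota 0 (2 * n)) f i =
  \prod_(i <- iota 0 n) f (2 * i).+1 * \prod_(i <- iota 0 n) f (2 * i)%nat.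
Proof.
elim: n => [|n IH]; first by rewrite muln0 /= !big_nil mulr1.
rewrite (_ : (2 * n.+1 = 2 * n + 2)%nat); last by lia.
rewrite iotaD big_cat IH add0n.
rewrite -[n.+1]addn1 [iota 0 (n + 1)]iotaD !big_cat /= !big_cons !big_nil add0n.

ring.
Qed.

Lemma odds_prod z n x : ((2 * n).-primitive_root z)%R -> (0 < n)%nat ->
  P z x [seq (2 * i).+1 | i <- iota 0 n] * (x ^+ n - 1) = x ^+ (2 * n) - 1.
Proof.
move=> pz n0.
rewrite -(@factor_eval z (2 * n) x pz) odd_even /P big_map; congr (_ * _).
have := @factor_sub z (2 * n) n x pz (dvdn_mull _ (dvdnn n)).
rewrite mulnK // /P big_map => <-.
by apply: eq_bigr => i _.
Qed.

Lemma caseA l t : lhsP (TA l) t * rhs_den (TA l) t = rhs_num (TA l) t.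
Proof.
have pz := @zeta_prim l.+1 isT.
have HA := @factor_eval _ _ (t ^+ 2) pz.
rewrite /= big_cons expr0 in HA.
rewrite /lhsP /rhs_den /rhs_num /= (exprM t 2 l.+1).
move: HA; set Q := \prod_(_ <- _) _ => HA.
have -> : (t ^+ 2) ^+ l.+1 = (t ^+ 2 - 1) * Q + 1 by rewrite HA subrK.
move: (t ^+ l.+1) => y; ring.
Qed.

Lemma caseC l t : (2 <= l)%nat -> lhsP (TC l) t * rhs_den (TC l) t = rhs_num (TC l) t.
Proof.
move=> l2.
have pz := @zeta_prim (2 * l) ltac:(lia).
have H := @odds_prod _ l (t ^+ 2) pz ltac:(lia).
rewrite /lhsP /rhs_den /rhs_num /=.
rewrite (exprM t 2 (2 * l)) (exprM t 2 l) mulnC exprM in H *.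
move: H; rewrite /P; set Q := \prod_(_ <- _) _ => H.
have -> : ((t ^+ 2) ^+ l) ^+ 2 = Q * ((t ^+ 2) ^+ l - 1) + 1 by rewrite H subrK.
move: ((t ^+ 2) ^+ l) => u; ring.
Qed.

Lemma caseB l t : (3 <= l)%nat -> lhsP (TB l) t * rhs_den (TB l) t = rhs_num (TB l) t.
Proof.
move=> l3.
have pz := @zeta_prim (2 * l) ltac:(lia).
have H := @odds_prod _ l (t ^+ 2) pz ltac:(lia).
rewrite /lhsP /rhs_den /rhs_num /=.
rewrite (_ : (2 * l - 2 = 2 * (l - 1))%nat); last by lia.
move: (t ^+ (2 * (l - 1))) => v.
rewrite (exprM t 2 (2 * l)) (exprM t 2 l) (mulnC 2 l) (exprM (t ^+ 2) l 2) in H *.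
move: H; rewrite /P; set Q := \prod_(_ <- _) _ => H.
have -> : ((t ^+ 2) ^+ l) ^+ 2 = Q * ((t ^+ 2) ^+ l - 1) + 1 by rewrite H subrK.
move: ((t ^+ 2) ^+ l) => u; ring.
Qed.

Lemma caseD l t : (4 <= l)%nat -> lhsP (TD l) t * rhs_den (TD l) t = rhs_num (TD l) t.
Proof.
case: l => [|m] // l4.
have pz := @zeta_prim (2 * m) ltac:(lia).
have H := @odds_prod _ m (t ^+ 2) pz ltac:(lia).
have pw := dvdn_prim_root pz (dvdn_mulr m (dvdnn 2)).
rewrite mulKn // in pw.
have H2 := @factor_eval _ _ (t ^+ 2) pw.
rewrite /= !big_cons big_nil expr0 expr1 mulr1 in H2.
rewrite /lhsP /rhs_den /rhs_num /=.
rewrite (_ : (2 * m.+1 - 2 = 2 * m)%nat); last by lia.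
rewrite (_ : (2 * m.+1 - 4 = 2 * (m - 1))%nat); last by lia.
rewrite (_ : (2 * (m.+1 - 2) = 2 * (m - 1))%nat); last by lia.
rewrite -cats1 big_cat big_seq1 /=.
move: (t ^+ (2 * (m - 1))) => v.
have E : (t ^+ 2) ^+ (2 * m) = ((t ^+ 2) ^+ m) ^+ 2 by rewrite mulnC exprM.
rewrite (exprM t 2 (2 * m)) (exprM t 2 m) E in H *.
rewrite (exprM t 2 2).
move: H H2; rewrite /P; set Q := \prod_(_ <- _) _ => H H2.
move: (t ^+ 2 - zeta (2 * m) ^+ m) H2 => W H2.
have -> : ((t ^+ 2) ^+ m) ^+ 2 = Q * ((t ^+ 2) ^+ m - 1) + 1 by rewrite H subrK.
have -> : (t ^+ 2) ^+ 2 = (t ^+ 2 - 1) * W + 1 by rewrite H2 subrK.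
move: ((t ^+ 2) ^+ m) => u; move: (t ^+ 2) => x.
ring.
Qed.

Theorem mainTheorem6 (X : cartan_type) (t : CC) :
  admissible X ->
  rhs_den X t != 0 ->
  \prod_(m <- exponents X) (t ^+ 2 - zeta (coxeter_number X) ^+ m)
    = rhs_num X t / rhs_den X t.
Proof.
move=> adm hd; rewrite -/(lhsP X t).
apply: (@finish X t hd) => {hd}.
case: X adm => [l|l|l|l| | | | | ] /= adm.
- exact: caseA.
- exact: caseB.
- exact: caseC.
- exact: caseD.
- exact: caseE6.
- exact: caseE7.
- exact: caseE8.
- exact: caseF4.
- exact: caseG2.
Qed.
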